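(* Let $\mathbb{S}=(\mathsf{S},\mu,\eta)$ be a Cartesian $k$-differential monad on a Cartesian $k$-differential category $\mathbb{X}$ with differential combinator $\mathsf{D}$. Then: (i) The Kleisli category $\mathsf{KL}(\mathbb{S})$, with the Cartesian left $k$-linear structure given by: terminal object and products of objects as in $\mathbb{X}$, projections $\llbracket\pi_j\rrbracket=\eta_{A_j}\circ\pi_j$, pairing $\llbracket\langle f_1,\dots,f_n\rangle\rrbracket=\omega^{-1}_{B_1,\dots,B_n}\circ\langle\llbracket f_1\rrbracket,\dots,\llbracket f_n\rrbracket\rangle$, and $k$-module structure on $\mathsf{KL}(\mathbb{S})(A,B)=\mathbb{X}(A,\mathsf{S}(B))$ inherited from $\mathbb{X}$, is a Cartesian $k$-differential category with differential combinator $\mathsf{D}_\mathbb{S}$ defined on a Kleisli map $\llbracket f\rrbracket:A\to\mathsf{S}(B)$ by $\llbracket\mathsf{D}_\mathbb{S}[f]\rrbracket:=\mathsf{D}[\llbracket f\rrbracket]:A\times A\to\mathsf{S}(B)$. (ii) A map $f$ of $\mathsf{KL}(\mathbb{S})$ is $\mathsf{D}_\mathbb{S}$-linear if and only if $\llbracket f\rrbracket$ is $\mathsf{D}$-linear in $\mathbb{X}$. (iii) $\mathsf{L}_\mathbb{S}:\mathbb{X}\to\mathsf{KL}(\mathbb{S})$ is a strict Cartesian $k$-differential functor and $\mathsf{R}_\mathbb{S}:\mathsf{KL}(\mathbb{S})\to\mathbb{X}$ is a strong Cartesian $k$-differential functor.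
   Context: Fix a commutative semiring $k$. A left $k$-linear category is a category $\mathbb{X}$ in which each hom-set $\mathbb{X}(A,B)$ is a $k$-module (scalar multiplication $r\cdot f$, addition $+$, zero $0$) such that precomposition is $k$-linear: $(r\cdot f+s\cdot g)\circ x=r\cdot(f\circ x)+s\cdot(g\circ x)$. A map $f$ is $k$-linear if $f\circ(r\cdot x+s\cdot y)=r\cdot(f\circ x)+s\cdot(f\circ y)$ for all suitable $x,y$ and $r,s\in k$. A Cartesian left $k$-linear category is a left $k$-linear category with finite products (terminal object $\ast$, projections $\pi_j:A_1\times\cdots\times A_n\to A_j$, pairing $\langle-,\dots,-\rangle$) in which all projections are $k$-linear. A Cartesian $k$-differential category is a Cartesian left $k$-linear category equipped with a differential combinator $\mathsf{D}$ assigning to each $f:A\to B$ a map $\mathsf{D}[f]:A\times A\to B$ such that: [CD.1] $\mathsf{D}[r\cdot f+s\cdot g]=r\cdot\mathsf{D}[f]+s\cdot\mathsf{D}[g]$; [CD.2] $\mathsf{D}[f]\circ\langle\pi_1,r\cdot\pi_2+s\cdot\pi_3\rangle=r\cdot(\mathsf{D}[f]\circ\langle\pi_1,\pi_2\rangle)+s\cdot(\mathsf{D}[f]\circ\langle\pi_1,\pi_3\rangle)$ (as maps $A\times A\times A\to B$); [CD.3] $\mathsf{D}[1_A]=\pi_2$ and, for $\pi_j:A_1\times\cdots\times A_n\to A_j$, $\mathsf{D}[\pi_j]=\pi_{n+j}$; [CD.4] $\mathsf{D}[\langle f_1,\dots,f_n\rangle]=\langle\mathsf{D}[f_1],\dots,\mathsf{D}[f_n]\rangle$;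 [CD.5] $\mathsf{D}[g\circ f]=\mathsf{D}[g]\circ\langle f\circ\pi_1,\mathsf{D}[f]\rangle$; [CD.6] $\mathsf{D}[\mathsf{D}[f]]\circ\langle\pi_1,0,0,\pi_2\rangle=\mathsf{D}[f]$; [CD.7] $\mathsf{D}[\mathsf{D}[f]]\circ\langle\pi_1,\pi_2,\pi_3,\pi_4\rangle=\mathsf{D}[\mathsf{D}[f]]\circ\langle\pi_1,\pi_3,\pi_2,\pi_4\rangle$ (identifying $(A\times A)\times(A\times A)$ with $A\times A\times A\times A$). A map $f$ is $\mathsf{D}$-linear if $\mathsf{D}[f]=f\circ\pi_2$. For Cartesian left $k$-linear categories $\mathbb{X},\mathbb{Y}$, a strong Cartesian $k$-linear functor is a functor $\mathsf{F}:\mathbb{X}\to\mathbb{Y}$ such that $\mathsf{F}(\ast)\to\ast$ is an isomorphism, the canonical maps $\omega_{A_1,\dots,A_n}=\langle\mathsf{F}(\pi_1),\dots,\mathsf{F}(\pi_n)\rangle:\mathsf{F}(A_1\times\cdots\times A_n)\to\mathsf{F}(A_1)\times\cdots\times\mathsf{F}(A_n)$ are isomorphisms, and $\mathsf{F}(r\cdot f+s\cdot g)=r\cdot\mathsf{F}(f)+s\cdot\mathsf{F}(g)$. It is strict if moreover $\omega$ is the identity. For Cartesian $k$-differential categories, a strong Cartesian $k$-differential functor is a strong Cartesian $k$-linear functor with $\mathsf{D}[\mathsf{F}(f)]=\mathsf{F}(\mathsf{D}[f])\circ\omega^{-1}_{A,A}$ for all $f:A\to B$; a strict Cartesian $k$-differential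 functor is a strict Cartesian $k$-linear functor with $\mathsf{D}[\mathsf{F}(f)]=\mathsf{F}(\mathsf{D}[f])$. A Cartesian $k$-differential monad on a Cartesian $k$-differential category $\mathbb{X}$ is a monad $\mathbb{S}=(\mathsf{S},\mu,\eta)$ on $\mathbb{X}$ such that $\mathsf{S}$ is a strong Cartesian $k$-differential functor and every $\eta_A$ and $\mu_A$ is $\mathsf{D}$-linear. Kleisli category notation: $\mathsf{KL}(\mathbb{S})$ has the objects of $\mathbb{X}$ and a map $f:A\to B$ in it is a map $\llbracket f\rrbracket:A\to\mathsf{S}(B)$ in $\mathbb{X}$; identities are $\llbracket 1_A\rrbracket=\eta_A$ and composition is $\llbracket g\circ f\rrbracket=\mu_C\circ\mathsf{S}(\llbracket g\rrbracket)\circ\llbracket f\rrbracket$. The functor $\mathsf{L}_\mathbb{S}:\mathbb{X}\to\mathsf{KL}(\mathbb{S})$ is identity on objects with $\llbracket\mathsf{L}_\mathbb{S}(f)\rrbracket=\eta_B\circ f$; the functor $\mathsf{R}_\mathbb{S}:\mathsf{KL}(\mathbb{S})\to\mathbb{X}$ is $\mathsf{R}_\mathbb{S}(A)=\mathsf{S}(A)$, $\mathsf{R}_\mathbb{S}(f)=\mu_B\circ\mathsf{S}(\llbracket f\rrbracket)$. *)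

(* Defs.v *)
From mathcomp Require Import all_boot all_algebra.
Set Implicit Arguments.
Unset Strict Implicit.
Unset Printing Implicit Defensive.
Import GRing.Theory.
Local Open Scope ring_scope.

Record CDCData (k : comPzSemiRingType) := {
  c_ob : Type;
  c_hom : c_ob -> c_ob -> Type;
  c_comp : forall A B E, c_hom B E -> c_hom A B -> c_hom A E;
  c_id : forall A, c_hom A A;
  c_add : forall A B, c_hom A B -> c_hom A B -> c_hom A B;
  c_zero : forall A B, c_hom A B;
  c_scal : forall A B, k -> c_hom A B -> c_hom A B;
  c_term : c_ob;
  c_prod : c_ob -> c_ob -> c_ob;
  c_p1 : forall A B, c_hom (c_prod A B) A;
  c_p2 : forall A B, c_hom (c_prod A B) B;
  c_pair : forall E A B, c_hom E A -> c_hom E B -> c_hom E (c_prod A B);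
  c_D : forall A B, c_hom A B -> c_hom (c_prod A A) B }.

Arguments c_ob {k} c.
Arguments c_hom {k c} _ _.
Arguments c_comp {k c A B E} _ _.
Arguments c_id {k c} A.
Arguments c_add {k c A B} _ _.
Arguments c_zero {k c} A B.
Arguments c_scal {k c A B} _ _.
Arguments c_term {k} c.
Arguments c_prod {k c} _ _.
Arguments c_p1 {k c} A B.
Arguments c_p2 {k c} A B.
Arguments c_pair {k c E A B} _ _.
Arguments c_D {k c A B} _.

Section Preds.
Variable k : comPzSemiRingType.
Variable C : CDCData k.
Local Notation ob := (c_ob C).
Local Notation hom := (@c_hom k C).

Definition lc (A B : ob) (r : k) (f : hom A B) (s : k) (g : hom A B) : hom A B :=
  c_add (c_scal r f) (c_scal s g).

Definition is_category : Prop :=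
  (forall (A B E F : ob) (h : hom E F) (g : hom B E) (f : hom A B),
      c_comp h (c_comp g f) = c_comp (c_comp h g) f) /\
  (forall (A B : ob) (f : hom A B), c_comp (c_id B) f = f) /\
  (forall (A B : ob) (f : hom A B), c_comp f (c_id A) = f).

Definition homs_are_kmodules : Prop :=
  forall A B : ob,
  (forall f g h : hom A B, c_add f (c_add g h) = c_add (c_add f g) h) /\
  (forall f g : hom A B, c_add f g = c_add g f) /\
  (forall f : hom A B, c_add (c_zero A B) f = f) /\
  (forall (r s : k) (f : hom A B), c_scal (r * s) f = c_scal r (c_scal s f)) /\
  (forall f : hom A B, c_scal 1 f = f) /\
  (forall (r : k) (f g : hom A B), c_scal r (c_add f g) = c_add (c_scal r f) (c_scal r g)) /\
  (forall (r s : k) (f : hom A B), c_scal (r + s) f = c_add (c_scal r f) (c_scal s f)) /\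
  (forall f : hom A B, c_scal 0 f = c_zero A B) /\
  (forall r : k, c_scal r (c_zero A B) = c_zero A B).

Definition precomp_linear : Prop :=
  forall (A B E : ob) (f g : hom B E) (x : hom A B) (r s : k),
    c_comp (lc r f s g) x = lc r (c_comp f x) s (c_comp g x).

Definition is_left_klinear_category : Prop :=
  is_category /\ homs_are_kmodules /\ precomp_linear.

Definition is_klinear (A B : ob) (f : hom A B) : Prop :=
  forall (E : ob) (x y : hom E A) (r s : k),
    c_comp f (lc r x s y) = lc r (c_comp f x) s (c_comp f y).

Definition is_terminal : Prop :=
  forall A : ob, inhabited (hom A (c_term C)) /\
                 forall f g : hom A (c_term C), f = g.

Definition is_product : Prop :=
  forall (E A B : ob),
  (forall (f : hom E A) (g : hom E B),
      c_comp (c_p1 A B) (c_pair f g) = f /\ c_comp (c_p2 A B) (c_pair f g) = g) /\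
  (forall h : hom E (c_prod A B),
      c_pair (c_comp (c_p1 A B) h) (c_comp (c_p2 A B) h) = h).

Definition is_cartesian_left_klinear : Prop :=
  is_left_klinear_category /\ is_terminal /\ is_product /\
  (forall A B : ob, is_klinear (c_p1 A B) /\ is_klinear (c_p2 A B)).

(** The differential combinator axioms. Triple products are A x (A x A),
    quadruple products are (A x A) x (A x A). *)
Definition CD1 : Prop :=
  forall (A B : ob) (r s : k) (f g : hom A B),
    c_D (lc r f s g) = lc r (c_D f) s (c_D g).

Definition CD2 : Prop :=
  forall (A B : ob) (f : hom A B) (r s : k),
  let pi1 := c_p1 A (c_prod A A) in
  let pi2 := c_comp (c_p1 A A) (c_p2 A (c_prod A A)) in
  let pi3 := c_comp (c_p2 A A) (c_p2 A (c_prod A A)) in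
  c_comp (c_D f) (c_pair pi1 (lc r pi2 s pi3)) =
  lc r (c_comp (c_D f) (c_pair pi1 pi2)) s (c_comp (c_D f) (c_pair pi1 pi3)).

Definition CD3 : Prop :=
  (forall A : ob, c_D (c_id A) = c_p2 A A) /\
  (forall A B : ob,
     c_D (c_p1 A B) = c_comp (c_p1 A B) (c_p2 (c_prod A B) (c_prod A B)) /\
     c_D (c_p2 A B) = c_comp (c_p2 A B) (c_p2 (c_prod A B) (c_prod A B))).

Definition CD4 : Prop :=
  forall (E A B : ob) (f : hom E A) (g : hom E B),
    c_D (c_pair f g) = c_pair (c_D f) (c_D g).

Definition CD5 : Prop :=
  forall (A B E : ob) (f : hom A B) (g : hom B E),
    c_D (c_comp g f) = c_comp (c_D g) (c_pair (c_comp f (c_p1 A A)) (c_D f)).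

Definition CD6 : Prop :=
  forall (A B : ob) (f : hom A B),
    c_comp (c_D (c_D f))
      (c_pair (c_pair (c_p1 A A) (c_zero _ A)) (c_pair (c_zero _ A) (c_p2 A A)))
    = c_D f.

Definition CD7 : Prop :=
  forall (A B : ob) (f : hom A B),
  let AA := c_prod A A in
  let q1 := c_comp (c_p1 A A) (c_p1 AA AA) in
  let q2 := c_comp (c_p2 A A) (c_p1 AA AA) in
  let q3 := c_comp (c_p1 A A) (c_p2 AA AA) in
  let q4 := c_comp (c_p2 A A) (c_p2 AA AA) in
  c_comp (c_D (c_D f)) (c_pair (c_pair q1 q2) (c_pair q3 q4)) =
  c_comp (c_D (c_D f)) (c_pair (c_pair q1 q3) (c_pair q2 q4)).

Definition is_CDC : Prop :=
  is_cartesian_left_klinear /\ CD1 /\ CD2 /\ CD3 /\ CD4 /\ CD5 /\ CD6 /\ CD7.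

Definition D_linear (A B : ob) (f : hom A B) : Prop :=
  c_D f = c_comp f (c_p2 A A).

End Preds.

Arguments is_category {k} C.
Arguments is_CDC {k} C.
Arguments is_cartesian_left_klinear {k} C.

Record FunctorData (k : comPzSemiRingType) (C1 C2 : CDCData k) := {
  f_ob : c_ob C1 -> c_ob C2;
  f_map : forall A B : c_ob C1, @c_hom k C1 A B -> @c_hom k C2 (f_ob A) (f_ob B) }.

Arguments f_ob {k C1 C2} f _.
Arguments f_map {k C1 C2} f {A B} _.

Definition castdom (k : comPzSemiRingType) (C : CDCData k) (A A' B : c_ob C)
  (e : A = A') (f : c_hom A B) : c_hom A' B :=
  eq_rect A (fun X => c_hom X B) f A' e.

Section Functors.
Variable k : comPzSemiRingType.
Variables C1 C2 : CDCData k.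
Variable F : FunctorData C1 C2.

Definition is_functor : Prop :=
  (forall A : c_ob C1, f_map F (c_id A) = c_id (f_ob F A)) /\
  (forall (A B E : c_ob C1) (g : c_hom B E) (f : c_hom A B),
      f_map F (c_comp g f) = c_comp (f_map F g) (f_map F f)).

Definition functor_klinear : Prop :=
  forall (A B : c_ob C1) (r s : k) (f g : c_hom A B),
    f_map F (lc r f s g) = lc r (f_map F f) s (f_map F g).

Definition omega (A B : c_ob C1) :
  c_hom (f_ob F (c_prod A B)) (c_prod (f_ob F A) (f_ob F B)) :=
  c_pair (f_map F (c_p1 A B)) (f_map F (c_p2 A B)).

Definition strong_CkL_with
  (winv : forall A B : c_ob C1,
      c_hom (c_prod (f_ob F A) (f_ob F B)) (f_ob F (c_prod A B))) : Prop :=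
  is_functor /\
  (exists (u : c_hom (f_ob F (c_term C1)) (c_term C2))
          (v : c_hom (c_term C2) (f_ob F (c_term C1))),
      c_comp v u = c_id _ /\ c_comp u v = c_id _) /\
  (forall A B : c_ob C1,
      c_comp (omega A B) (winv A B) = c_id _ /\
      c_comp (winv A B) (omega A B) = c_id _) /\
  functor_klinear.

Definition strong_CD_with
  (winv : forall A B : c_ob C1,
      c_hom (c_prod (f_ob F A) (f_ob F B)) (f_ob F (c_prod A B))) : Prop :=
  strong_CkL_with winv /\
  (forall (A B : c_ob C1) (f : c_hom A B),
      c_D (f_map F f) = c_comp (f_map F (c_D f)) (winv A A)).

Definition is_strong_CDFunctor : Prop :=
  exists winv, strong_CD_with winv.

(** strict: F preserves terminal object and products on the nose and
    omega is the identity (after transport along these equalities). *)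
Definition is_strict_CDFunctor : Prop :=
  is_functor /\ functor_klinear /\
  exists (eT : f_ob F (c_term C1) = c_term C2)
         (eP : forall A B : c_ob C1,
               f_ob F (c_prod A B) = c_prod (f_ob F A) (f_ob F B)),
    (forall A B : c_ob C1, castdom (eP A B) (omega A B) = c_id _) /\
    (forall (A B : c_ob C1) (f : c_hom A B),
        c_D (f_map F f) = castdom (eP A A) (f_map F (c_D f))).

End Functors.

Arguments is_strong_CDFunctor {k C1 C2} F.
Arguments is_strict_CDFunctor {k C1 C2} F.

Record MonadData (k : comPzSemiRingType) (C : CDCData k) := {
  m_S : FunctorData C C;
  m_eta : forall A : c_ob C, c_hom A (f_ob m_S A);
  m_mu : forall A : c_ob C, c_hom (f_ob m_S (f_ob m_S A)) (f_ob m_S A);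
  (* chosen inverse of omega_{A,B} : S(A x B) -> S(A) x S(B) *)
  m_winv : forall A B : c_ob C,
      c_hom (c_prod (f_ob m_S A) (f_ob m_S B)) (f_ob m_S (c_prod A B)) }.

Arguments m_S {k C} m.
Arguments m_eta {k C} m A.
Arguments m_mu {k C} m A.
Arguments m_winv {k C} m A B.

Section Monads.
Variable k : comPzSemiRingType.
Variable C : CDCData k.
Variable M : MonadData C.
Local Notation S := (f_ob (m_S M)).
Local Notation Sm := (f_map (m_S M)).
Local Notation eta := (m_eta M).
Local Notation mu := (m_mu M).

Definition is_monad : Prop :=
  is_functor (m_S M) /\
  (forall (A B : c_ob C) (f : c_hom A B), c_comp (Sm f) (eta A) = c_comp (eta B) f) /\
  (forall (A B : c_ob C) (f : c_hom A B),
      c_comp (Sm f) (mu A) = c_comp (mu B) (Sm (Sm f))) /\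
  (forall A : c_ob C, c_comp (mu A) (Sm (eta A)) = c_id _) /\
  (forall A : c_ob C, c_comp (mu A) (eta (S A)) = c_id _) /\
  (forall A : c_ob C, c_comp (mu A) (mu (S A)) = c_comp (mu A) (Sm (mu A))).

Definition is_CDMonad : Prop :=
  is_monad /\ strong_CD_with (m_winv M) /\
  (forall A : c_ob C, D_linear (eta A)) /\
  (forall A : c_ob C, D_linear (mu A)).

Definition Kleisli : CDCData k := {|
  c_ob := c_ob C;
  c_hom := fun A B => c_hom A (S B);
  c_comp := fun A B E g f => c_comp (c_comp (mu E) (Sm g)) f;
  c_id := fun A => eta A;
  c_add := fun A B f g => c_add f g;
  c_zero := fun A B => c_zero A (S B);
  c_scal := fun A B r f => c_scal r f;
  c_term := c_term C;
  c_prod := fun A B => c_prod A B;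
  c_p1 := fun A B => c_comp (eta A) (c_p1 A B);
  c_p2 := fun A B => c_comp (eta B) (c_p2 A B);
  c_pair := fun E A B f g => c_comp (m_winv M A B) (c_pair f g);
  c_D := fun A B f => c_D f |}.

Definition LS : FunctorData C Kleisli :=
  @Build_FunctorData k C Kleisli (fun A => A)
    (fun (A B : c_ob C) (f : @c_hom k C A B) =>
       (c_comp (eta B) f : @c_hom k Kleisli A B)).

Definition RS : FunctorData Kleisli C :=
  @Build_FunctorData k Kleisli C (fun A => S A)
    (fun (A B : c_ob C) (f : @c_hom k Kleisli A B) =>
       c_comp (mu B) (Sm (f : @c_hom k C A (S B)))).

End Monads.

Arguments is_CDMonad {k C} M.
Arguments Kleisli {k C} M.
Arguments LS {k C} M.
Arguments RS {k C} M.

(* Main.v *)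
Require Import Defs.
From mathcomp Require Import all_boot all_algebra.
Set Implicit Arguments. Unset Strict Implicit. Unset Printing Implicit Defensive.

Ltac destrC H :=
  let Ha := fresh "Ha" in let Hl := fresh "Hl" in let Hr := fresh "Hr" in
  let Hm := fresh "Hm" in let Hp := fresh "Hp" in let Ht := fresh "Ht" in
  let Hpr := fresh "Hpr" in let Hpk := fresh "Hpk" in
  let H1 := fresh "H1" in let H2 := fresh "H2" in let H3 := fresh "H3" in
  let H4 := fresh "H4" in let H5 := fresh "H5" in let H6 := fresh "H6" in
  let H7 := fresh "H7" in
  move: H => [[[[Ha [Hl Hr]] [Hm Hp]] [Ht [Hpr Hpk]]] [H1 [H2 [H3 [H4 [H5 [H6 H7]]]]]]].

Section G.
Variable k : comPzSemiRingType.
Variable C : CDCData k.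
Hypothesis H : is_CDC C.

Lemma cA A B E F (h : @c_hom k C E F) (g : @c_hom k C B E) (f : @c_hom k C A B) :
  c_comp h (c_comp g f) = c_comp (c_comp h g) f.
Proof. destrC H; exact: Ha. Qed.
Lemma cidl A B (f : @c_hom k C A B) : c_comp (c_id B) f = f.
Proof. destrC H; exact: Hl. Qed.
Lemma cidr A B (f : @c_hom k C A B) : c_comp f (c_id A) = f.
Proof. destrC H; exact: Hr. Qed.
Lemma p1_pair E A B (f : @c_hom k C E A) (g : c_hom E B) : c_comp (c_p1 A B) (c_pair f g) = f.
Proof. destrC H; by case: (Hpr E A B) => /(_ f g) []. Qed.
Lemma p2_pair E A B (f : @c_hom k C E A) (g : c_hom E B) : c_comp (c_p2 A B) (c_pair f g) = g.
Proof. destrC H; by case: (Hpr E A B) => /(_ f g) []. Qed.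
Lemma pair_eta E A B (h : @c_hom k C E (c_prod A B)) :
  c_pair (c_comp (c_p1 A B) h) (c_comp (c_p2 A B) h) = h.
Proof. destrC H; by case: (Hpr E A B). Qed.
Lemma pair_comp E' E A B (f : @c_hom k C E A) (g : c_hom E B) (h : c_hom E' E) :
  c_comp (c_pair f g) h = c_pair (c_comp f h) (c_comp g h).
Proof. by rewrite -[LHS]pair_eta !cA p1_pair p2_pair. Qed.
Lemma pair_ext E A B (h h' : @c_hom k C E (c_prod A B)) :
  c_comp (c_p1 A B) h = c_comp (c_p1 A B) h' ->
  c_comp (c_p2 A B) h = c_comp (c_p2 A B) h' -> h = h'.
Proof. by move=> e1 e2; rewrite -(pair_eta h) -(pair_eta h') e1 e2. Qed.
Lemma lc_comp A B E (f g : @c_hom k C B E) (x : c_hom A B) r s :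
  c_comp (lc r f s g) x = lc r (c_comp f x) s (c_comp g x).
Proof. destrC H; exact: Hp. Qed.
Lemma scal0 A B (f : @c_hom k C A B) : c_scal 0%R f = c_zero A B.
Proof. destrC H; by case: (Hm A B) => [_ [_ [_ [_ [_ [_ [_ []]]]]]]]. Qed.
Lemma add0 A B (f : @c_hom k C A B) : c_add (c_zero A B) f = f.
Proof. destrC H; by case: (Hm A B) => [_ [_ []]]. Qed.
Lemma lc00 A B (f g : @c_hom k C A B) : lc 0%R f 0%R g = c_zero A B.
Proof. by rewrite /lc !scal0 add0. Qed.
Lemma D1 A B (r s : k) (f g : @c_hom k C A B) : c_D (lc r f s g) = lc r (c_D f) s (c_D g).
Proof. destrC H; exact: H1. Qed.
Lemma D5 A B E (f : @c_hom k C A B) (g : c_hom B E) :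
    c_D (c_comp g f) = c_comp (c_D g) (c_pair (c_comp f (c_p1 A A)) (c_D f)).
Proof. destrC H; exact: H5. Qed.
Lemma D4 E A B (f : @c_hom k C E A) (g : c_hom E B) : c_D (c_pair f g) = c_pair (c_D f) (c_D g).
Proof. destrC H; exact: H4. Qed.

Lemma Dlin_klin A B (f : @c_hom k C A B) : D_linear f -> is_klinear f.
Proof.
move=> Df E x y r s.
case: H => [_ [_ [D2 _]]].
have := D2 A B f r s => /= /(congr1 (fun z => c_comp z (c_pair x (c_pair x y)))).
rewrite !lc_comp -!cA !pair_comp !lc_comp -!cA ?p1_pair ?p2_pair ?p1_pair ?p2_pair.
idtac.
by rewrite Df -!cA !p2_pair.
Qed.
Lemma klin_zero A B E (f : @c_hom k C A B) : is_klinear f -> c_comp f (c_zero E A) = c_zero E B.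
Proof.
move=> kf; have := kf E (c_zero E A) (c_zero E A) 0%R 0%R.
by rewrite !lc00.
Qed.
Lemma Dlin_comp A B E (f : @c_hom k C A B) (g : c_hom B E) :
  D_linear f -> D_linear g -> D_linear (c_comp g f).
Proof.
rewrite /D_linear => df dg; rewrite D5 dg df -!cA; congr c_comp.
by rewrite p2_pair.
Qed.
Lemma D3id (A : c_ob C) : c_D (c_id A) = c_p2 A A.
Proof. destrC H; by case: H3. Qed.
Lemma D3p1 (A B : c_ob C) : c_D (c_p1 A B) = c_comp (c_p1 A B) (c_p2 (c_prod A B) (c_prod A B)).
Proof. destrC H; case: H3 => _ h; by case: (h A B). Qed.
Lemma D3p2 (A B : c_ob C) : c_D (c_p2 A B) = c_comp (c_p2 A B) (c_p2 (c_prod A B) (c_prod A B)).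
Proof. destrC H; case: H3 => _ h; by case: (h A B). Qed.
Lemma CD2C : CD2 C. Proof. by destrC H. Qed.
Lemma CD6C : CD6 C. Proof. by destrC H. Qed.
Lemma CD7C : CD7 C. Proof. by destrC H. Qed.
Lemma termC : is_terminal C. Proof. by destrC H. Qed.
Lemma kmodC : homs_are_kmodules C. Proof. by destrC H. Qed.
Lemma pairid (A B : c_ob C) : c_pair (c_p1 A B) (c_p2 A B) = c_id (c_prod A B).
Proof. by rewrite -{1}(pair_eta (c_id _)) !cidr. Qed.

Variable M : MonadData C.
Hypothesis HM : is_CDMonad M.
Local Notation S := (f_ob (m_S M)).
Local Notation Sm := (f_map (m_S M)).
Local Notation eta := (m_eta M).
Local Notation mu := (m_mu M).
Local Notation winv := (m_winv M).

Ltac destrM := let Hmon := fresh "Hmon" in let Hfun := fresh "Hfun" in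
  let Hterm := fresh "Hterm" in let Hom := fresh "Hom" in let Hkl := fresh "Hkl" in
  let HD := fresh "HD" in let Heta := fresh "Heta" in let Hmu := fresh "Hmu" in
  let Sid := fresh "Sid" in let Scomp := fresh "Scomp" in let Hen := fresh "Hen" in
  let Hmn := fresh "Hmn" in let Hl1 := fresh "Hl1" in let Hl2 := fresh "Hl2" in
  let Hl3 := fresh "Hl3" in let Hf2 := fresh "Hf2" in
  move: HM => [[Hf2 [Hen [Hmn [Hl1 [Hl2 Hl3]]]]] [[[[Sid Scomp] [Hterm [Hom Hkl]]] HD] [Heta Hmu]]].

Lemma Sid (A : c_ob C) : Sm (c_id A) = c_id (S A). Proof. by destrM. Qed.
Lemma Scomp A B E (g : @c_hom k C B E) (f : c_hom A B) : Sm (c_comp g f) = c_comp (Sm g) (Sm f).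
Proof. by destrM. Qed.
Lemma eta_nat A B (f : @c_hom k C A B) : c_comp (Sm f) (eta A) = c_comp (eta B) f.
Proof. by destrM. Qed.
Lemma mu_nat A B (f : @c_hom k C A B) : c_comp (Sm f) (mu A) = c_comp (mu B) (Sm (Sm f)).
Proof. by destrM. Qed.
Lemma mu_Seta (A : c_ob C) : c_comp (mu A) (Sm (eta A)) = c_id _. Proof. by destrM. Qed.
Lemma mu_eta (A : c_ob C) : c_comp (mu A) (eta (S A)) = c_id _. Proof. by destrM. Qed.
Lemma mu_assoc (A : c_ob C) : c_comp (mu A) (mu (S A)) = c_comp (mu A) (Sm (mu A)). Proof. by destrM. Qed.
Lemma Sklin : functor_klinear (m_S M). Proof. by destrM. Qed.
Lemma SD A B (f : @c_hom k C A B) : c_D (Sm f) = c_comp (Sm (c_D f)) (winv A A).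
Proof. by destrM. Qed.
Lemma om_w (A B : c_ob C) : c_comp (omega (m_S M) A B) (winv A B) = c_id _.
Proof. by destrM; case: (Hom A B). Qed.
Lemma w_om (A B : c_ob C) : c_comp (winv A B) (omega (m_S M) A B) = c_id _.
Proof. by destrM; case: (Hom A B). Qed.
Lemma Sterm : exists (u : c_hom (S (c_term C)) (c_term C)) (v : c_hom (c_term C) (S (c_term C))),
      c_comp v u = c_id _ /\ c_comp u v = c_id _.
Proof. by destrM. Qed.
Lemma eta_Dlin (A : c_ob C) : D_linear (eta A). Proof. by destrM. Qed.
Lemma mu_Dlin (A : c_ob C) : D_linear (mu A). Proof. by destrM. Qed.
Lemma eta_klin (A : c_ob C) : is_klinear (eta A). Proof. exact: Dlin_klin (eta_Dlin A). Qed.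
Lemma mu_klin (A : c_ob C) : is_klinear (mu A). Proof. exact: Dlin_klin (mu_Dlin A). Qed.

Lemma Sp1w (A B : c_ob C) : c_comp (Sm (c_p1 A B)) (winv A B) = c_p1 (S A) (S B).
Proof. by rewrite -(p1_pair (Sm (c_p1 A B)) (Sm (c_p2 A B))) -cA -/(omega _ _ _) om_w cidr. Qed.
Lemma Sp2w (A B : c_ob C) : c_comp (Sm (c_p2 A B)) (winv A B) = c_p2 (S A) (S B).
Proof. by rewrite -(p2_pair (Sm (c_p1 A B)) (Sm (c_p2 A B))) -cA -/(omega _ _ _) om_w cidr. Qed.

Lemma kl_etar A A' B (g : @c_hom k C A (S B)) (h : c_hom A' A) :
  c_comp (c_comp (mu B) (Sm g)) (c_comp (eta A) h) = c_comp g h.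
Proof. by rewrite cA -(cA (mu B)) eta_nat cA mu_eta cidl. Qed.
Lemma kl_etal A B (g : @c_hom k C A B) :
  c_comp (mu B) (Sm (c_comp (eta B) g)) = Sm g.
Proof. by rewrite Scomp cA mu_Seta cidl. Qed.
Lemma w_eta E A B (a : @c_hom k C E A) (b : c_hom E B) :
  c_comp (winv A B) (c_pair (c_comp (eta A) a) (c_comp (eta B) b)) = c_comp (eta _) (c_pair a b).
Proof.
have -> : c_pair (c_comp (eta A) a) (c_comp (eta B) b) =
          c_comp (omega (m_S M) A B) (c_comp (eta _) (c_pair a b)).
  apply: pair_ext.
    by rewrite p1_pair cA /omega cA p1_pair eta_nat -cA p1_pair.
  by rewrite p2_pair cA /omega cA p2_pair eta_nat -cA p2_pair.
by rewrite cA w_om cidl.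
Qed.
Lemma omega_Dlin (A B : c_ob C) : D_linear (omega (m_S M) A B).
Proof.
rewrite /D_linear /omega D4 !SD D3p1 D3p2 !Scomp -!cA Sp2w pair_comp //.
Qed.
Lemma winv_Dlin (A B : c_ob C) : D_linear (winv A B).
Proof.
rewrite /D_linear.
have e1 : c_D (c_comp (winv A B) (omega (m_S M) A B)) = c_p2 _ _ by rewrite w_om D3id.
rewrite D5 omega_Dlin in e1.
set Q := c_pair (c_comp (winv A B) (c_p1 _ _)) (c_comp (winv A B) (c_p2 _ _)).
have e2 : c_comp (c_pair (c_comp (omega (m_S M) A B) (c_p1 _ _))
                         (c_comp (omega (m_S M) A B) (c_p2 _ _))) Q = c_id _.
  by rewrite pair_comp -!cA /Q p1_pair p2_pair !cA om_w !cidl pairid.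
by rewrite -[LHS]cidr -e2 cA e1 /Q p2_pair.
Qed.
Lemma compR A B B' E F (a : @c_hom k C B F) (b : c_hom A B) (c : c_hom B' F) (d : c_hom A B')
  (x : c_hom E A) : c_comp a b = c_comp c d -> c_comp a (c_comp b x) = c_comp c (c_comp d x).
Proof. by move=> e; rewrite !cA e. Qed.
Lemma klLL A A' B (g : @c_hom k C A B) (f : c_hom A' A) :
  c_comp (c_comp (mu B) (Sm (c_comp (eta B) g))) (c_comp (eta A) f) = c_comp (eta B) (c_comp g f).
Proof. by rewrite kl_etar -cA. Qed.
Lemma etalc E A (r s : k) (a b : @c_hom k C E A) :
  lc r (c_comp (eta A) a) s (c_comp (eta A) b) = c_comp (eta A) (lc r a s b).
Proof. by rewrite eta_klin. Qed.
Lemma Sp1_Dlin A B : D_linear (Sm (c_p1 A B)).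
Proof. by rewrite /D_linear SD D3p1 Scomp -cA Sp2w. Qed.
Lemma Sp2_Dlin A B : D_linear (Sm (c_p2 A B)).
Proof. by rewrite /D_linear SD D3p2 Scomp -cA Sp2w. Qed.
Lemma lcK A B r s (f g : @c_hom k (Kleisli M) A B) :
  @lc k (Kleisli M) A B r f s g = @lc k C A (S B) r f s g.
Proof. by []. Qed.

Lemma KL_CDC : is_CDC (Kleisli M).
Proof.
split; [split; [split; [split; [|split]|split]|split; [|split]]|].
- move=> A B E F h g f /=.
  rewrite !Scomp -!cA.
  by rewrite (compR _ (esym (mu_assoc _))) (compR _ (esym (mu_nat _))).
- move=> A B f /=. by rewrite mu_Seta cidl.
- move=> A B f /=. by rewrite -cA eta_nat cA mu_eta cidl.
- move=> A B; refine (kmodC A (S B)).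
- move=> A B E f g x r s; rewrite !lcK /=.
  by rewrite Sklin mu_klin lc_comp.
- move=> A.
  have tu : forall (Y : c_ob C) (f g : c_hom Y (c_term C)), f = g := fun Y => proj2 (termC Y).
  case: (termC A) => [[t] _].
  case: Sterm => u [v [vu uv]].
  split; first by constructor; exact: (c_comp v t).
  change (forall f g : @c_hom k C A (S (c_term C)), f = g); move=> f g.
  by rewrite -(cidl f) -(cidl g) -vu -(cA v u f) -(cA v u g) (tu _ (c_comp u f) (c_comp u g)).
- move=> E A B; split.
    move=> f g /=; rewrite !kl_etal; split; [by rewrite cA Sp1w p1_pair | by rewrite cA Sp2w p2_pair].
  move=> h /=; rewrite !kl_etal.
  by rewrite -pair_comp cA (w_om A B) cidl.
- move=> A B; split=> E x y r s; rewrite !lcK /= !kl_etal.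
    exact: (Dlin_klin (Sp1_Dlin A B)).
  exact: (Dlin_klin (Sp2_Dlin A B)).
- split; [|split; [|split; [|split; [|split; [|split]]]]].
  + move=> A B r s f g; refine (D1 r s f g).
  + move=> A B f r s; cbn -[lc]; rewrite !lcK; cbn -[lc]; rewrite !klLL etalc !w_eta !kl_etar.
    have := CD2C f r s; cbv zeta; done.
  + split.
      move=> A /=; exact: eta_Dlin.
    move=> A B; split=> /=; rewrite klLL D5 eta_Dlin -cA p2_pair ?D3p1 ?D3p2 //.
  + move=> E A B f g /=.
    by rewrite D5 winv_Dlin -cA p2_pair D4.
  + move=> A B E f g /=.
    rewrite kl_etar D5 D5 mu_Dlin -(cA (mu E)) p2_pair SD -!cA.
    by [].
  + move=> A B f /=.
    rewrite -(@klin_zero _ _ (c_prod A A) _ (@eta_klin A)) !w_eta kl_etar.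
    exact: CD6C.
  + move=> A B f /=.
    rewrite !klLL !w_eta !kl_etar.
    have := CD7C f; cbv zeta; done.
Qed.
Lemma KL_Dlin (A B : c_ob C) (f : @c_hom k (Kleisli M) A B) :
  @D_linear k (Kleisli M) A B f <-> @D_linear k C A (S B) f.
Proof. by rewrite /D_linear /= kl_etar. Qed.

Lemma LS_strict : is_strict_CDFunctor (LS M).
Proof.
split; [split|split].
- by move=> A /=; rewrite cidr.
- by move=> A B E g f /=; rewrite klLL.
- by move=> A B r s f g; rewrite lcK /= etalc.
exists erefl, (fun A B => erefl); split.
- move=> A B /=. by rewrite w_eta pairid cidr.
- move=> A B f /=. by rewrite D5 eta_Dlin -cA p2_pair.
Qed.

Lemma RS_strong : is_strong_CDFunctor (RS M).
Proof.
exists winv; split; [split; [split|split; [|split]]|].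
- by move=> A /=; rewrite mu_Seta.
- move=> A B E g f /=.
  rewrite !Scomp -!cA (compR _ (esym (mu_assoc _))) (compR _ (esym (mu_nat _))).
  by rewrite !cA.
- exact: Sterm.
- move=> A B; rewrite /omega /= !kl_etal; split; [exact: om_w | exact: w_om].
- by move=> A B r s f g; rewrite lcK /= Sklin mu_klin.
- move=> A B f /=.
  by rewrite D5 mu_Dlin -cA p2_pair SD cA.
Qed.
End G.

Theorem mainTheorem3 (k : comPzSemiRingType) (X : CDCData k) (M : MonadData X) :
  is_CDC X -> is_CDMonad M ->
  is_CDC (Kleisli M) /\
  (forall (A B : c_ob X) (f : @c_hom k (Kleisli M) A B),
      @D_linear k (Kleisli M) A B f <-> @D_linear k X A (f_ob (m_S M) B) f) /\
  is_strict_CDFunctor (LS M) /\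
  is_strong_CDFunctor (RS M).
Proof.
move=> HX HM; split; first exact: KL_CDC.
split; first by move=> A B f; exact: KL_Dlin.
split; [exact: LS_strict | exact: RS_strong].
Qed.
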